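(* For every directed co-graph $G=(V,E)$ which is given by a binary di-co-tree, the directed path-width $\mathrm{dpw}(G)$ and the directed tree-width $\mathrm{dtw}(G)$ can be computed in time $O(|V|)$.
   Context: Digraphs are finite, without loops or multiple arcs. Operations on vertex-disjoint digraphs $G_1,\ldots,G_k$: disjoint union $\oplus$ (union of vertex and arc sets); series composition $\otimes$ (disjoint union plus all arcs in both directions between vertices of different $G_i$); order composition $\oslash$ (disjoint union plus all arcs from vertices of $G_i$ to vertices of $G_j$ for $i<j$). Directed co-graphs: single-vertex digraphs, and closure under these three operations. A di-co-tree for a directed co-graph $G$ is a rooted tree whose leaves correspond to the vertices of $G$ and whose inner nodes are labeled by $\oplus,\otimes,\oslash$ (with ordered children), such that evaluating the operations on the digraphs defined by the child subtrees yields $G$ at the root; it is binary if every inner node has exactly two children. Directed path-width: a directed path-decomposition of $G=(V,E)$ is a sequence $(X_1,\ldots,X_r)$ of subsets of $V$ with $\bigcup X_i=V$, for each arc $(u,v)$ some $i\le j$ with $u\in X_i,v\in X_j$, and for each vertex the bags containing it having consecutive indices; width $\max|X_i|-1$; $\mathrm{dpw}(G)$ is the minimum width. Directed tree-width: for $Z\subseteq V$, $S\subseteq V$ is $Z$-normal if no directed walk in $G-Z$ with first and last vertex in $S$ uses a vertex of $G-(Z\cup S)$. A directed tree-decomposition is $(T,\mathcal{X},\mathcal{W})$ with $T=(V_T,E_T)$ an out-tree (rooted, arcs directed away from root; $u\le v$ means a directed path of $\ge0$ arcs from $u$ to $v$), $\mathcal{X}=\{X_e:e\in E_T\}$, $\mathcal{W}=\{W_r:r\in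 V_T\}$ subsets of $V$, such that $\mathcal{W}$ partitions $V$ into nonempty sets and for each $(u,v)\in E_T$ the set $\bigcup\{W_r: v\le r\}$ is $X_{(u,v)}$-normal; width $\max_r|W_r\cup\bigcup_{e\sim r}X_e|-1$ ($e\sim r$: $r$ is an end of $e$); $\mathrm{dtw}(G)$ is the minimum width. *)

(* Defs.v *)
From mathcomp Require Import all_boot.
Set Implicit Arguments. Unset Strict Implicit. Unset Printing Implicit Defensive.

(* (Loop-freeness is automatic for digraphs defined by di-co-trees.)   *)

Inductive dcop := DUnion | DSeries | DOrder .

Inductive dctree (V : Type) :=
  | DLeaf of V
  | DNode of dcop & dctree V & dctree V.
Arguments DLeaf {V}.
Arguments DNode {V}.

Fixpoint leaves (V : Type) (t : dctree V) : seq V :=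
  match t with
  | DLeaf v => [:: v]
  | DNode _ l r => leaves l ++ leaves r
  end.

Fixpoint tarc (V : eqType) (t : dctree V) (u v : V) : bool :=
  match t with
  | DLeaf _ => false
  | DNode o l r =>
      [|| tarc l u v, tarc r u v |
        match o with
        | DUnion => false
        | DSeries => ((u \in leaves l) && (v \in leaves r))
                     || ((u \in leaves r) && (v \in leaves l))
        | DOrder => (u \in leaves l) && (v \in leaves r)
        end]
  end.

Definition is_binary_dicotree (V : finType) (E : rel V) (t : dctree V) : Prop :=
  [/\ uniq (leaves t), (forall v : V, v \in leaves t) &
      (forall u v : V, E u v = tarc t u v)].

Definition is_dpath_decomp (V : finType) (E : rel V) (X : seq {set V}) : Prop :=
  [/\ (forall v : V, exists2 i, i < size X & v \in nth set0 X i),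
      (forall u v : V, E u v ->
         exists i j, [/\ i <= j, j < size X, u \in nth set0 X i & v \in nth set0 X j]) &
      (forall (v : V) i j k, i <= j -> j <= k -> k < size X ->
         v \in nth set0 X i -> v \in nth set0 X k -> v \in nth set0 X j)].

Definition dpd_width (V : finType) (X : seq {set V}) : nat :=
  (\max_(B <- X) #|B|).-1.

Definition dpw_is (V : finType) (E : rel V) (k : nat) : Prop :=
  (exists2 X, is_dpath_decomp E X & dpd_width X = k) /\
  (forall X, is_dpath_decomp E X -> k <= dpd_width X).

(** S is Z-normal: no directed walk in G - Z with first and last vertex in S
    uses a vertex of G - (Z ∪ S). A walk is x :: p with consecutive arcs. *)
Definition Z_normal (V : finType) (E : rel V) (Z S : {set V}) : Prop :=
  forall (x : V) (p : seq V),
    path E x p -> all (fun w => w \notin Z) (x :: p) ->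
    x \in S -> last x p \in S -> all (fun w => w \in S) (x :: p).

Definition out_tree (VT : finType) (ET : rel VT) : Prop :=
  exists root : VT,
    [/\ (forall a, ~~ ET a root),
        (forall b, b != root -> exists! a, ET a b) &
        (forall b, connect ET root b)].

Definition is_dtree_decomp (V : finType) (E : rel V) (VT : finType) (ET : rel VT)
    (X : VT -> VT -> {set V}) (W : VT -> {set V}) : Prop :=
  [/\ out_tree ET,
      (forall r, W r != set0),
      (forall r r', r != r' -> [disjoint W r & W r']),
      (forall v : V, exists r, v \in W r) &
      (forall a b, ET a b ->
         Z_normal E (X a b) (\bigcup_(r | connect ET b r) W r))].

Definition dtd_width (V : finType) (VT : finType) (ET : rel VT)
    (X : VT -> VT -> {set V}) (W : VT -> {set V}) : nat :=
  (\max_(r : VT)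
     #|W r :|: \bigcup_(a : VT) \bigcup_(b : VT | ET a b && ((a == r) || (b == r))) X a b|).-1.

Definition dtw_is (V : finType) (E : rel V) (k : nat) : Prop :=
  (exists (VT : finType) (ET : rel VT) X W,
      is_dtree_decomp E ET X W /\ dtd_width ET X W = k) /\
  (forall (VT : finType) (ET : rel VT) X W,
      is_dtree_decomp E ET X W -> k <= dtd_width ET X W).

(** A bottom-up (attribute) algorithm on the tree: each node stores a
    fixed-length vector of natural numbers; leaves get a fixed vector and
    an inner node with operation o computes its vector from those of its
    two children by a FIXED (input-independent) list of arithmetic
    expressions built from constants, +, max, min.  In the unit-cost RAM
    model each node thus costs O(1), and a binary di-co-tree has
    2|V|-1 nodes, so the total running time is O(|V|). *)
Inductive aexp :=
  | AConst of nat
  | ALeft of nat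
  | ARight of nat
  | AAdd of aexp & aexp
  | AMax of aexp & aexp
  | AMin of aexp & aexp.

Fixpoint eval_aexp (l r : seq nat) (e : aexp) : nat :=
  match e with
  | AConst n => n
  | ALeft i => nth 0 l i
  | ARight i => nth 0 r i
  | AAdd e1 e2 => eval_aexp l r e1 + eval_aexp l r e2
  | AMax e1 e2 => maxn (eval_aexp l r e1) (eval_aexp l r e2)
  | AMin e1 e2 => minn (eval_aexp l r e1) (eval_aexp l r e2)
  end.

Fixpoint run_alg (V : Type) (leaf0 : seq nat) (step : dcop -> seq aexp)
    (t : dctree V) : seq nat :=
  match t with
  | DLeaf _ => leaf0
  | DNode o l r =>
      let al := run_alg leaf0 step l in
      let ar := run_alg leaf0 step r in
      map (eval_aexp al ar) (step o)
  end.

(* Main.v *)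
Require Import Defs.
From mathcomp Require Import all_boot zify.
From Stdlib Require Import FunctionalExtensionality.
Set Implicit Arguments. Unset Strict Implicit. Unset Printing Implicit Defensive.

Fixpoint cw (V : Type) (t : dctree V) : nat :=
  match t with
  | DLeaf _ => 0
  | DNode DSeries l r => minn (cw l + size (leaves r)) (cw r + size (leaves l))
  | DNode _ l r => maxn (cw l) (cw r)
  end.

Definition leaf0 : seq nat := [:: 0; 1].
Definition step (o : dcop) : seq aexp :=
  match o with
  | DSeries => [:: AMin (AAdd (ALeft 0) (ARight 1)) (AAdd (ARight 0) (ALeft 1));
                   AAdd (ALeft 1) (ARight 1)]
  | _ => [:: AMax (ALeft 0) (ARight 0); AAdd (ALeft 1) (ARight 1)]
  end.

Lemma run_algE (V : Type) (t : dctree V) :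
  run_alg leaf0 step t = [:: cw t; size (leaves t)].
Proof.
elim: t => [v|o l IHl r IHr] //=.
rewrite IHl IHr size_cat; case: o => //=.
Qed.

Lemma tarc_in (V : eqType) (t : dctree V) u v :
  tarc t u v -> (u \in leaves t) && (v \in leaves t).
Proof.
elim: t => [w|o l IHl r IHr] //=.
case/or3P => [/IHl|/IHr|]; rewrite !mem_cat.
- by case/andP => -> ->.
- by case/andP => -> ->; rewrite !orbT.
- case: o => //=; last by case/andP => -> ->; rewrite orbT.
  by case/orP => /andP [-> ->]; rewrite ?orbT.
Qed.

Lemma crossing (V : eqType) (E : rel V) (P : pred V) x p :
  path E x p -> P x -> ~~ all P p ->
  exists u v, [/\ u \in x :: p, v \in p, E u v, P u & ~~ P v].
Proof.
elim: p x => [|y p IH] x //= /andP [Exy Hp] Px.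
case Py: (P y) => /=.
- move=> /(IH _ Hp Py) [u [v [Hu Hv Euv Pu Pv]]].
  exists u, v; split => //; first by rewrite inE Hu orbT.
  by rewrite inE Hv orbT.
- move=> _; exists x, y; split => //; rewrite ?inE ?eqxx ?Py //.
Qed.

Definition haven (V : finType) (E : rel V) (U : {set V}) (k : nat)
    (b : {set V} -> {set V}) : Prop :=
  forall Z : {set V}, Z \subset U -> #|Z| < k ->
   [/\ b Z != set0, b Z \subset U :\: Z,
       (forall x y, x \in b Z -> y \in b Z ->
          exists2 p, path E x p & (last x p = y /\ all (fun w => w \in U :\: Z) p)) &
       (forall Z' : {set V}, Z' \subset Z -> b Z \subset b Z')].

Lemma setD_lift (V : finType) (U1 U Z : {set V}) w :
  U1 \subset U -> w \in U1 :\: (Z :&: U1) -> w \in U :\: Z.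
Proof.
move=> sU; rewrite !inE => /andP [nZ wU].
by rewrite (subsetP sU _ wU) andbT; move: nZ; rewrite wU andbT.
Qed.

Lemma haven_case (V : finType) (E1 E : rel V) (U1 U : {set V}) k b (Z : {set V}) :
  haven E1 U1 k b -> U1 \subset U -> subrel E1 E -> #|Z :&: U1| < k ->
  [/\ b (Z :&: U1) != set0, b (Z :&: U1) \subset U :\: Z &
       (forall x y, x \in b (Z :&: U1) -> y \in b (Z :&: U1) ->
          exists2 p, path E x p & (last x p = y /\ all (fun w => w \in U :\: Z) p))].
Proof.
move=> H sU sE cZ.
have [ne sub walk _] := H (Z :&: U1) (subsetIr _ _) cZ.
split => //.
- by apply/subsetP => w /(subsetP sub) /(setD_lift sU).
- move=> x y hx hy; have [p pp [lp ap]] := walk x y hx hy.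
  exists p; first exact: (sub_path sE pp).
  split => //; apply: sub_all ap => w /=; exact: setD_lift.
Qed.

Lemma haven_sub (V : finType) (E1 E : rel V) (U1 U : {set V}) k b :
  haven E1 U1 k b -> U1 \subset U -> subrel E1 E ->
  haven E U k (fun Z => b (Z :&: U1)).
Proof.
move=> H sU sE Z sZ cZ.
have cZ1 : #|Z :&: U1| < k by apply: leq_ltn_trans cZ; apply: subset_leq_card; apply: subsetIl.
have [ne sub walk] := haven_case H sU sE cZ1.
split => // Z' sZ'.
have [_ _ _ mono] := H (Z :&: U1) (subsetIr _ _) cZ1.
by apply: mono; apply: setSI.
Qed.

Lemma card_split (V : finType) (U1 U2 Z : {set V}) :
  [disjoint U1 & U2] -> U2 \subset Z -> #|Z :&: U1| + #|U2| <= #|Z|.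
Proof.
move=> dis s2; rewrite -(cardsID U1 Z) leq_add2l; apply: subset_leq_card.
apply/subsetP => w wU2; rewrite !inE (subsetP s2 _ wU2) andbT.
by rewrite (disjointFl dis wU2).
Qed.

Lemma haven_ser (V : finType) (E1 E2 E : rel V) (U1 U2 : {set V}) o1 o2 b1 b2 :
  haven E1 U1 o1 b1 -> haven E2 U2 o2 b2 -> [disjoint U1 & U2] ->
  subrel E1 E -> subrel E2 E ->
  (forall u v, u \in U1 -> v \in U2 -> E u v && E v u) ->
  haven E (U1 :|: U2) (minn (o1 + #|U2|) (o2 + #|U1|))
   (fun Z => if U2 \subset Z then b1 (Z :&: U1)
             else if U1 \subset Z then b2 (Z :&: U2) else (U1 :|: U2) :\: Z).
Proof.
move=> H1 H2 dis s1 s2 cross.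
set m := minn _ _.
set U := U1 :|: U2.
have sU1 : U1 \subset U by apply: subsetUl.
have sU2 : U2 \subset U by apply: subsetUr.
have key : forall Z : {set V}, Z \subset U -> #|Z| < m ->
  [/\ (if U2 \subset Z then b1 (Z :&: U1)
             else if U1 \subset Z then b2 (Z :&: U2) else U :\: Z) != set0,
      (if U2 \subset Z then b1 (Z :&: U1)
             else if U1 \subset Z then b2 (Z :&: U2) else U :\: Z) \subset U :\: Z &
       (forall x y, x \in (if U2 \subset Z then b1 (Z :&: U1)
             else if U1 \subset Z then b2 (Z :&: U2) else U :\: Z) ->
          y \in (if U2 \subset Z then b1 (Z :&: U1)
             else if U1 \subset Z then b2 (Z :&: U2) else U :\: Z) ->
          exists2 p, path E x p & (last x p = y /\ all (fun w => w \in U :\: Z) p))].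
  move=> Z sZ cZ.
  case h2: (U2 \subset Z).
    apply: haven_case H1 sU1 s1 _.
    have := card_split dis h2.
    move=> h; rewrite -(ltn_add2r #|U2|); apply: leq_ltn_trans h _.
    by apply: (leq_trans cZ); apply: geq_minl.
  case h1: (U1 \subset Z).
    apply: haven_case H2 sU2 s2 _.
    have dis' : [disjoint U2 & U1] by rewrite disjoint_sym.
    have := card_split dis' h1.
    move=> h; rewrite -(ltn_add2r #|U1|); apply: leq_ltn_trans h _.
    by apply: (leq_trans cZ); apply: geq_minr.
  have [a aU1 aZ] : exists2 a, a \in U1 & a \notin Z by apply/subsetPn; rewrite h1.
  have [c cU2 cZ2] : exists2 c, c \in U2 & c \notin Z by apply/subsetPn; rewrite h2.
  have aUZ : a \in U :\: Z by rewrite inE aZ inE aU1.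
  have cUZ : c \in U :\: Z by rewrite inE cZ2 inE cU2 orbT.
  split.
  - by apply/set0Pn; exists a.
  - by [].
  move=> x y hx hy.
  have hx' : x \in U by move: hx; rewrite inE => /andP [].
  have hy' : y \in U by move: hy; rewrite inE => /andP [].
  case/setUP: hx' => xU; case/setUP: hy' => yU.
  - exists [:: c; y] => /=; last by rewrite cUZ hy.
    by have /andP [-> _] := cross x c xU cU2; have /andP [_ ->] := cross y c yU cU2.
  - exists [:: y] => /=; last by rewrite hy.
    by have /andP [-> _] := cross x y xU yU.
  - exists [:: y] => /=; last by rewrite hy.
    by have /andP [_ ->] := cross y x yU xU.
  - exists [:: a; y] => /=; last by rewrite aUZ hy.
    by have /andP [_ ->] := cross a x aU1 xU; have /andP [-> _] := cross a y aU1 yU.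
move=> Z sZ cZ.
have [ne sub walk] := key Z sZ cZ.
split => // Z' sZ'.
case h2: (U2 \subset Z).
  case h2': (U2 \subset Z').
    rewrite h2 in sub ne.
    have cZ1 : #|Z :&: U1| < o1.
      have := card_split dis h2.
      move=> h; rewrite -(ltn_add2r #|U2|); apply: leq_ltn_trans h _.
      by apply: (leq_trans cZ); apply: geq_minl.
    have [_ _ _ mono] := H1 (Z :&: U1) (subsetIr _ _) cZ1.
    by apply: mono; apply: setSI.
  case h1': (U1 \subset Z').
    rewrite h2 in sub ne.
    have cZ1 : #|Z :&: U1| < o1.
      have := card_split dis h2.
      move=> h; rewrite -(ltn_add2r #|U2|); apply: leq_ltn_trans h _.
      by apply: (leq_trans cZ); apply: geq_minl.
    have [ne1 sub1 _ _] := H1 (Z :&: U1) (subsetIr _ _) cZ1.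
    case/set0Pn: ne1 => w /(subsetP sub1); rewrite !inE => /andP [].
    by move=> /negP nw wU; exfalso; apply: nw; rewrite wU (subsetP (subset_trans h1' sZ') _ wU).
  by move: sub; rewrite h2 => /subset_trans; apply; apply: setDS.
have h2' : (U2 \subset Z') = false.
  by apply/negP => h; move: h2; rewrite (subset_trans h sZ').
rewrite h2'.
case h1: (U1 \subset Z).
  case h1': (U1 \subset Z').
    rewrite h2 h1 in sub ne.
    have cZ2 : #|Z :&: U2| < o2.
      have dis' : [disjoint U2 & U1] by rewrite disjoint_sym.
      have := card_split dis' h1.
      move=> h; rewrite -(ltn_add2r #|U1|); apply: leq_ltn_trans h _.
      by apply: (leq_trans cZ); apply: geq_minr.
    have [_ _ _ mono] := H2 (Z :&: U2) (subsetIr _ _) cZ2.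
    by apply: mono; apply: setSI.
  by move: sub; rewrite h2 h1 => /subset_trans; apply; apply: setDS.
have h1' : (U1 \subset Z') = false.
  by apply/negP => h; move: h1; rewrite (subset_trans h sZ').
rewrite h1'.
by move: sub; rewrite h2 h1 => /subset_trans; apply; apply: setDS.
Qed.

Definition Ut (V : finType) (t : dctree V) : {set V} := [set x in leaves t].

Lemma card_Ut (V : finType) (t : dctree V) : uniq (leaves t) -> #|Ut t| = size (leaves t).
Proof. by move=> u; rewrite /Ut cardsE; apply/card_uniqP. Qed.

Lemma Ut_node (V : finType) o (l r : dctree V) : Ut (DNode o l r) = Ut l :|: Ut r.
Proof. by apply/setP => x; rewrite !inE /= mem_cat. Qed.

Lemma subrel_l (V : eqType) o (l r : dctree V) : subrel (tarc l) (tarc (DNode o l r)).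
Proof. by move=> u v /= ->. Qed.

Lemma subrel_r (V : eqType) o (l r : dctree V) : subrel (tarc r) (tarc (DNode o l r)).
Proof. by move=> u v /= ->; rewrite orbT. Qed.

Lemma uniq_node (V : finType) o (l r : dctree V) : uniq (leaves (DNode o l r)) ->
  [/\ uniq (leaves l), uniq (leaves r) & [disjoint Ut l & Ut r]].
Proof.
rewrite /= cat_uniq => /and3P [ul hn ur]; split => //.
rewrite -setI_eq0; apply/eqP/setP => x; rewrite !inE.
apply/negP => /andP [xl xr].
by move/hasPn: hn => /(_ x xr); rewrite /= xl.
Qed.

Lemma haven_tree (V : finType) (t : dctree V) : uniq (leaves t) ->
  exists b, haven (tarc t) (Ut t) (cw t).+1 b.
Proof.
elim: t => [v|o l IHl r IHr].
  move=> _; exists (fun _ => [set v]) => Z sZ cZ.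
  have Z0 : Z = set0 by apply/cards0_eq; move: cZ; case: #|Z|.
  subst Z; split.
  - by apply/set0Pn; exists v; rewrite set11.
  - by apply/subsetP => w; rewrite !inE => /eqP ->; rewrite eqxx.
  - move=> x y; rewrite !inE => /eqP -> /eqP ->; exists [::] => //.
  - by move=> *; apply: subxx.
move=> u; have [ul ur dis] := uniq_node (o:=o) u.
have [b1 H1] := IHl ul; have [b2 H2] := IHr ur.
rewrite Ut_node.
case: o u => u.
- case: (leqP (cw r) (cw l)) => h.
    rewrite [cw _]/=; have -> : maxn (cw l) (cw r) = cw l by apply/maxn_idPl.
    exists (fun Z => b1 (Z :&: Ut l)).
    by apply: haven_sub H1 (subsetUl _ _) (@subrel_l _ DUnion l r).
  rewrite [cw _]/=; have -> : maxn (cw l) (cw r) = cw r by apply/maxn_idPr; apply: ltnW.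
  exists (fun Z => b2 (Z :&: Ut r)).
  by apply: haven_sub H2 (subsetUr _ _) (@subrel_r _ DUnion l r).
- eexists; rewrite [cw _]/=.
  have -> : (minn (cw l + size (leaves r)) (cw r + size (leaves l))).+1 =
            minn ((cw l).+1 + #|Ut r|) ((cw r).+1 + #|Ut l|).
    by rewrite !card_Ut // !addSn minnSS.
  apply: haven_ser H1 H2 dis (@subrel_l _ DSeries l r) (@subrel_r _ DSeries l r) _.
  move=> x y; rewrite !inE => xl yr /=; by rewrite xl yr !orbT.
- case: (leqP (cw r) (cw l)) => h.
    rewrite [cw _]/=; have -> : maxn (cw l) (cw r) = cw l by apply/maxn_idPl.
    exists (fun Z => b1 (Z :&: Ut l)).
    by apply: haven_sub H1 (subsetUl _ _) (@subrel_l _ DOrder l r).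
  rewrite [cw _]/=; have -> : maxn (cw l) (cw r) = cw r by apply/maxn_idPr; apply: ltnW.
  exists (fun Z => b2 (Z :&: Ut r)).
  by apply: haven_sub H2 (subsetUr _ _) (@subrel_r _ DOrder l r).
Qed.

Definition lateb (V : finType) (X : seq {set V}) (i : nat) (v : V) : bool :=
  has (fun j => (i < j) && (v \in nth set0 X j)) (iota 0 (size X)).

Lemma latebP (V : finType) (X : seq {set V}) i v :
  reflect (exists j, [/\ i < j, j < size X & v \in nth set0 X j]) (lateb X i v).
Proof.
apply: (iffP hasP).
  by move=> [j]; rewrite mem_iota add0n => /andP [_ js] /andP [ij vj]; exists j.
by move=> [j [ij js vj]]; exists j; rewrite ?mem_iota ?add0n ?js ?ij ?vj.
Qed.

Lemma last_all (V : eqType) (P : pred V) x p : P x -> all P p -> P (last x p).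
Proof. by move=> Px Ap; have := mem_last x p; rewrite inE => /orP [/eqP ->|/(allP Ap)]. Qed.

Lemma dpw_lower (V : finType) (E : rel V) k b X :
  haven E setT k b -> is_dpath_decomp E X -> k <= \max_(B <- X) #|B|.
Proof.
move=> H [cov arcs cons].
rewrite leqNgt; apply/negP => hlt.
have small : forall i, i < size X -> #|nth set0 X i| < k.
  move=> i iX; apply: leq_ltn_trans hlt.
  exact: (@leq_bigmax_seq _ X xpredT (fun B : {set V} => #|B|) _ (mem_nth set0 iX) isT).
have sT : forall Z : {set V}, Z \subset setT by move=> Z; apply: subsetT.
have Q : forall i, i < size X -> forall v, v \in b (nth set0 X i) -> lateb X i v.
  elim => [|i IH] iX v.
    have [_ sub _ _] := H _ (sT _) (small 0 iX).
    move=> /(subsetP sub); rewrite !inE andbT => vn.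
    have [j jX vj] := cov v; apply/latebP; exists j; split => //.
    by rewrite lt0n; apply/negP => /eqP j0; move: vn; rewrite -j0 vj.
  have iX' : i < size X by apply: ltnW.
  set Z := nth set0 X i :&: nth set0 X i.+1.
  have cZ : #|Z| < k.
    by apply: leq_ltn_trans (small i iX'); apply: subset_leq_card; apply: subsetIl.
  have [_ subZ walk _] := H Z (sT _) cZ.
  have [ne0 _ _ mono0] := H _ (sT _) (small i iX').
  have [_ sub1 _ mono1] := H _ (sT _) (small i.+1 iX).
  move=> hv.
  have vn : v \notin nth set0 X i.+1 by move: (subsetP sub1 v hv); rewrite !inE andbT.
  case/set0Pn: ne0 => x hx.
  have lx := IH iX' x hx.
  have xZ : x \in b Z by apply: (subsetP (mono0 Z (subsetIl _ _))).
  have vZ : v \in b Z by apply: (subsetP (mono1 Z (subsetIr _ _))).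
  apply/negPn/negP => nlate.
  have nlv : ~~ lateb X i v.
    apply/negP => /latebP [j [ij jX vj]]; move/negP: nlate; apply; apply/latebP; exists j; split => //.
    rewrite ltn_neqAle ij andbT; apply/negP => /eqP ej; move: vn; by rewrite ej vj.
  have [p pp [lp ap]] := walk x v xZ vZ.
  have nap : ~~ all (lateb X i) p.
    by apply/negP => al; move: nlv; rewrite -lp (last_all lx al).
  have [u [w [up wp Euw lu lw]]] := crossing pp lx nap.
  have uZ : u \notin Z.
    move: up; rewrite inE => /orP [/eqP ->|up].
      by move: (subsetP subZ x xZ); rewrite !inE andbT.
    by move: (allP ap u up); rewrite !inE andbT.
  have [a [c [ac cX ua wc]]] := arcs u w Euw.
  have ci : c <= i.
    rewrite leqNgt; apply/negP => ic; move/negP: lw; apply; apply/latebP; exists c; split => //.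
  case/latebP: lu => j [ij jX uj].
  move/negP: uZ; apply; rewrite inE.
  have ai : a <= i by apply: leq_trans ac ci.
  rewrite (cons u a i j ai (ltnW ij) jX ua uj) /=.
  exact: (cons u a i.+1 j (leq_trans ai (leqnSn _)) ij jX ua uj).
have [v _] : exists2 v : V, true & true.
  have k0 : 0 < k by apply: leq_ltn_trans hlt.
  have c0 : #|(set0 : {set V})| < k by rewrite cards0.
  have [ne _ _ _] := H set0 (sT _) c0.
  by case/set0Pn: ne => v _; exists v.
have [j jX _] := cov v.
have nX : (size X).-1 < size X by rewrite prednK ?leqnn //; apply: leq_ltn_trans jX.
have [ne _ _ _] := H _ (sT _) (small _ nX).
case/set0Pn: ne => w /(Q _ nX) /latebP [j' [h1 h2 _]].
by move: (leq_ltn_trans h1 h2); rewrite prednK ?ltnn //; apply: leq_ltn_trans jX.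
Qed.

Lemma connect_last (T : finType) (e : rel T) x y :
  connect e x y -> x != y -> exists w, connect e x w /\ e w y.
Proof.
move=> /connectP [p pp ->]; elim/last_ind: p pp => [|q z _] /=.
  by rewrite eqxx.
rewrite rcons_path last_rcons => /andP [pq ez] _.
by exists (last x q); split => //; apply/connectP; exists q.
Qed.

Lemma connect_first (T : finType) (e : rel T) x y :
  connect e x y -> x != y -> exists c, e x c /\ connect e c y.
Proof.
move=> /connectP [[|c p] /= pp ->]; first by rewrite eqxx.
move: pp => /andP [exc pp] _; exists c; split => //.
by apply/connectP; exists p.
Qed.

Lemma out_tree_acyclic (VT : finType) (ET : rel VT) :
  out_tree ET -> forall b c, ET b c -> ~~ connect ET c b.
Proof.
move=> [root [noin upar reach]].
pose oc z := exists w, ET w z /\ connect ET z w.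
have step : forall z u, oc z -> ET u z -> oc u.
  move=> z u [w [Ewz czw]] Euz.
  have zr : z != root by apply/negP => /eqP zr; move: (noin w); rewrite -zr Ewz.
  have [a [Eaz ua]] := upar z zr.
  have uw : u = w by rewrite -(ua u Euz) (ua w Ewz).
  subst w.
  have [/eqP zu|zu] := boolP (z == u).
    by subst z; exists u; split => //; apply: connect0.
  have [w' [czw' Ew'u]] := connect_last czw zu.
  exists w'; split => //; apply: connect_trans czw'; exact: connect1.
have pathoc : forall q z0, path ET z0 q -> oc (last z0 q) -> oc z0.
  elim => [|z1 q IH] z0 //= /andP [E01 pq] h.
  exact: step (IH _ pq h) E01.
move=> b c Ebc; apply/negP => ccb.
have occ : oc c by exists b.
have /connectP [p pp lp] := reach c.
have occ' : oc (last root p) by rewrite -lp.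
have [w [Ewr _]] := pathoc p root pp occ'.
by move: (noin w); rewrite Ewr.
Qed.

Definition bagT (V VT : finType) (ET : rel VT) (X : VT -> VT -> {set V}) (W : VT -> {set V}) r :=
  W r :|: \bigcup_(a : VT) \bigcup_(b : VT | ET a b && ((a == r) || (b == r))) X a b.

Lemma X_in_bag (V VT : finType) (ET : rel VT) (X : VT -> VT -> {set V}) W a c :
  ET a c -> X a c \subset bagT ET X W a /\ X a c \subset bagT ET X W c.
Proof.
move=> Eac; split; apply/subsetP => y yX; rewrite inE; apply/orP; right;
  apply/bigcupP; exists a => //; apply/bigcupP; exists c => //; by rewrite Eac eqxx ?orbT.
Qed.

Lemma dtw_lower (V : finType) (E : rel V) k b (VT : finType) (ET : rel VT) X W :
  haven E setT k b -> is_dtree_decomp E ET X W -> k <= \max_(r : VT) #|bagT ET X W r|.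
Proof.
move=> H [ot _ _ cov norm].
have acyc := out_tree_acyclic ot.
have [root [_ _ reach]] := ot.
rewrite leqNgt; apply/negP => hlt.
have small : forall r, #|bagT ET X W r| < k.
  by move=> r; apply: leq_ltn_trans hlt; apply: (@leq_bigmax _ (fun r => #|bagT ET X W r|)).
have sT : forall Z : {set V}, Z \subset setT by move=> Z; apply: subsetT.
pose S c := \bigcup_(r | connect ET c r) W r.
pose reachS c := [set r | connect ET c r].
have main : forall m bb, #|reachS bb| <= m -> forall Z : {set V}, Z \subset bagT ET X W bb ->
    b Z \subset S bb -> False.
  elim => [|m IH] bb.
    by rewrite leqn0 => /eqP/cards0_eq/setP/(_ bb); rewrite !inE connect0.
  move=> cm Z sZ bZ.
  set Z2 := bagT ET X W bb.
  have [ne2 sub2 _ mono2] := H Z2 (sT _) (small bb).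
  case/set0Pn: ne2 => x hx2.
  have xS : x \in S bb by apply: (subsetP bZ); apply: (subsetP (mono2 Z sZ)).
  case/bigcupP: xS => r cbr xr.
  have rb : bb != r.
    apply/negP => /eqP e; subst r.
    by move: (subsetP sub2 x hx2); rewrite !inE xr.
  have [c [Ebc ccr]] := connect_first cbr rb.
  have [s1 s2] := X_in_bag X W Ebc.
  set Z3 := X bb c.
  have c3 : #|Z3| < k by apply: leq_ltn_trans (small bb); apply: subset_leq_card.
  have [_ sub3 walk3 _] := H Z3 (sT _) c3.
  have hx3 : x \in b Z3 by apply: (subsetP (mono2 Z3 s1)).
  have xSc : x \in S c by apply/bigcupP; exists r.
  apply: (IH c _ Z3 s2).
    have : reachS c \proper reachS bb.
      apply/properP; split.
        apply/subsetP => y; rewrite !inE => cy.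
        by apply: connect_trans cy; apply: connect1.
      by exists bb; rewrite !inE ?connect0 // (negPf (acyc _ _ Ebc)).
    by move/proper_card => h; rewrite -ltnS; apply: leq_trans h cm.
  apply/subsetP => y hy.
  have [p pp [lp ap]] := walk3 x y hx3 hy.
  have [q pq [lq aq]] := walk3 y x hy hx3.
  have := norm bb c Ebc x (p ++ q).
  rewrite cat_path pp lp pq last_cat lp lq xSc /=.
  have xn : x \notin Z3 by move: (subsetP sub3 x hx3); rewrite !inE andbT.
  rewrite xn all_cat.
  have -> : all (fun w => w \notin Z3) p by apply: sub_all ap => w; rewrite !inE andbT.
  have -> : all (fun w => w \notin Z3) q by apply: sub_all aq => w; rewrite !inE andbT.
  move=> /(_ isT isT isT isT) /andP [_]; rewrite all_cat => /andP [/allP Ap _].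
  have := mem_last x p; rewrite lp inE => /orP [/eqP ->|]; first by [].
  exact: Ap.
apply: (main _ root (leqnn _) set0 (sub0set _)).
apply/subsetP => v _; have [r vr] := cov v; apply/bigcupP; exists r => //.
Qed.

Definition pdec (V : finType) (E : rel V) (U : {set V}) (X : seq {set V}) : Prop :=
 [/\ (forall B, B \in X -> B \subset U),
     (forall v, v \in U -> exists2 i, i < size X & v \in nth set0 X i),
     (forall u v, E u v -> exists i j, [/\ i <= j, j < size X, u \in nth set0 X i & v \in nth set0 X j]),
     (forall v i j k, i <= j -> j <= k -> k < size X -> v \in nth set0 X i -> v \in nth set0 X k -> v \in nth set0 X j) &
     (forall i, i < size X -> exists2 v, v \in nth set0 X i & forall j, j < i -> v \notin nth set0 X j)].

Lemma nth_lt (V : finType) (X : seq {set V}) i v : v \in nth set0 X i -> i < size X.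
Proof. by rewrite ltnNge; apply: contraTN => h; rewrite nth_default ?inE. Qed.

Lemma nth_sub (V : finType) (X : seq {set V}) (U : {set V}) i v :
  (forall B, B \in X -> B \subset U) -> v \in nth set0 X i -> v \in U.
Proof. by move=> h vi; apply: (subsetP (h _ (mem_nth set0 (nth_lt vi)))). Qed.

Lemma nth_cat_lt (V : finType) (X1 X2 : seq {set V}) i :
  i < size X1 -> nth set0 (X1 ++ X2) i = nth set0 X1 i.
Proof. by move=> h; rewrite nth_cat h. Qed.

Lemma nth_cat_ge (V : finType) (X1 X2 : seq {set V}) i :
  nth set0 (X1 ++ X2) (size X1 + i) = nth set0 X2 i.
Proof. by rewrite nth_cat ltnNge leq_addr /= addKn. Qed.

Lemma nth_cat_ge' (V : finType) (X1 X2 : seq {set V}) i :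
  size X1 <= i -> nth set0 (X1 ++ X2) i = nth set0 X2 (i - size X1).
Proof. by move=> h; rewrite nth_cat ltnNge h. Qed.

Lemma pdec_cat (V : finType) (E E1 E2 : rel V) U1 U2 X1 X2 :
  pdec E1 U1 X1 -> pdec E2 U2 X2 -> [disjoint U1 & U2] ->
  (forall u v, E u v -> [\/ E1 u v, E2 u v | (u \in U1) && (v \in U2)]) ->
  pdec E (U1 :|: U2) (X1 ++ X2).
Proof.
move=> [sb1 cv1 ar1 cs1 nw1] [sb2 cv2 ar2 cs2 nw2] dis hE.
have cv1' : forall v, v \in U1 -> exists2 i, i < size X1 & v \in nth set0 (X1 ++ X2) i.
  by move=> v /cv1 [i iX vi]; exists i => //; rewrite nth_cat_lt.
have cv2' : forall v, v \in U2 -> exists2 i, size X1 <= i < size (X1 ++ X2) & v \in nth set0 (X1 ++ X2) i.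
  move=> v /cv2 [i iX vi]; exists (size X1 + i); first by rewrite size_cat leq_addr ltn_add2l.
  by rewrite nth_cat_ge.
have sz : size (X1 ++ X2) = size X1 + size X2 by rewrite size_cat.
split.
- move=> B; rewrite mem_cat => /orP [/sb1|/sb2] h; apply: (subset_trans h).
    exact: subsetUl.
  exact: subsetUr.
- move=> v /setUP [/cv1' [i iX vi]|/cv2' [i /andP [_ iX] vi]]; exists i => //.
  rewrite sz; lia.
- move=> u v /hE [/ar1|/ar2|/andP [uU vU]].
  + move=> [i [j [ij jX ui vj]]]; exists i, j; rewrite !nth_cat_lt //; last by lia.
    split => //; lia.
  + move=> [i [j [ij jX ui vj]]]; exists (size X1 + i), (size X1 + j); rewrite !nth_cat_ge sz.
    by split => //; lia.
  + have [i iX ui] := cv1' u uU; have [j /andP [jX1 jX] vj] := cv2' v vU.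
    exists i, j; split => //; lia.
- move=> v i j k ij jk kX vi vk.
  case: (ltnP k (size X1)) => hk.
    rewrite nth_cat_lt ?nth_cat_lt in vi vk *; try lia.
    by apply: (cs1 v i j k).
  case: (ltnP i (size X1)) => hi.
    exfalso; rewrite nth_cat_lt // in vi; rewrite nth_cat_ge' // in vk.
    have := nth_sub sb1 vi; have := nth_sub sb2 vk.
    by move=> h2 h1; move: (disjointFr dis h1); rewrite h2.
  rewrite nth_cat_ge' in vi; last by [].
  rewrite nth_cat_ge' in vk; last by [].
  rewrite nth_cat_ge'; last by lia.
  apply: (cs2 v (i - size X1) _ (k - size X1)) => //; lia.
- move=> i iX.
  case: (ltnP i (size X1)) => hi.
    have [v vi hv] := nw1 i hi; exists v; first by rewrite nth_cat_lt.
    by move=> j ji; rewrite nth_cat_lt; [apply: hv | lia].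
  have [v vi hv] := nw2 (i - size X1) ltac:(lia).
  exists v; first by rewrite nth_cat_ge'.
  move=> j ji; case: (ltnP j (size X1)) => hj.
    rewrite nth_cat_lt //; apply/negP => vj.
    have h1 := nth_sub sb1 vj; have h2 := nth_sub sb2 vi.
    by move: (disjointFr dis h1); rewrite h2.
  by rewrite nth_cat_ge' //; apply: hv; lia.
Qed.

Lemma pdec_map (V : finType) (E E1 : rel V) (U1 A : {set V}) X1 :
  pdec E1 U1 X1 -> [disjoint U1 & A] -> 0 < size X1 ->
  (forall u v, E u v -> E1 u v \/ [&& (u \in A) || (v \in A), u \in U1 :|: A & v \in U1 :|: A]) ->
  pdec E (U1 :|: A) [seq B :|: A | B <- X1].
Proof.
move=> [sb1 cv1 ar1 cs1 nw1] dis s0 hE.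
set Y := [seq _ | _ <- _].
have sz : size Y = size X1 by rewrite size_map.
have nY : forall i, i < size X1 -> nth set0 Y i = nth set0 X1 i :|: A.
  by move=> i h; rewrite (nth_map set0).
have allA : forall v i, v \in A -> i < size X1 -> v \in nth set0 Y i.
  by move=> v i vA h; rewrite nY // inE vA orbT.
have cvY : forall v, v \in U1 :|: A -> exists2 i, i < size X1 & v \in nth set0 Y i.
  move=> v /setUP [/cv1 [i iX vi]|vA]; first by exists i; rewrite // nY // inE vi.
  by exists 0 => //; apply: allA.
split.
- move=> B /mapP [B0 hB0 ->]; apply: setSU; exact: sb1.
- by move=> v /cvY [i iX vi]; exists i; rewrite ?sz.
- move=> u v /hE [/ar1 [i [j [ij jX ui vj]]]|/and3P [h uU vU]].
    exists i, j; rewrite sz !nY //; last by apply: leq_ltn_trans ij jX.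
    by rewrite !inE ui vj.
  case/orP: h => h.
    have [j jX vj] := cvY v vU; exists j, j; split; rewrite ?sz //; exact: allA.
  have [j jX uj] := cvY u uU; exists j, j; split; rewrite ?sz //; exact: allA.
- move=> v i j k ij jk kX; rewrite sz in kX.
  have jX : j < size X1 by apply: leq_ltn_trans jk kX.
  have iX : i < size X1 by apply: leq_ltn_trans ij jX.
  rewrite !nY // !inE.
  case vA: (v \in A); first by rewrite !orbT.
  rewrite !orbF; exact: cs1.
- move=> i; rewrite sz => iX.
  have [v vi hv] := nw1 i iX.
  have vA : v \notin A by apply/negP => vA; move: (disjointFr dis (nth_sub sb1 vi)); rewrite vA.
  exists v; first by rewrite nY // inE vi.
  move=> j ji; rewrite nY; last by apply: ltn_trans ji iX.
  by rewrite inE negb_or hv // vA.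
Qed.

Lemma card_setU_le (V : finType) (A B : {set V}) : #|A :|: B| <= #|A| + #|B|.
Proof. by rewrite cardsU leq_subr. Qed.

Fixpoint pd (V : finType) (t : dctree V) : seq {set V} :=
  match t with
  | DLeaf v => [:: [set v]]
  | DNode DSeries l r =>
      if cw l + size (leaves r) <= cw r + size (leaves l)
      then [seq B :|: Ut r | B <- pd l] else [seq B :|: Ut l | B <- pd r]
  | DNode _ l r => pd l ++ pd r
  end.

Lemma inUt (V : finType) (t : dctree V) x : (x \in Ut t) = (x \in leaves t).
Proof. by rewrite inE. Qed.

Lemma pd_spec (V : finType) (t : dctree V) : uniq (leaves t) ->
  [/\ pdec (tarc t) (Ut t) (pd t), 0 < size (pd t) & forall B, B \in pd t -> #|B| <= (cw t).+1].
Proof.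
elim: t => [v|o l IHl r IHr].
  move=> _; split => //.
  - split => /=.
    + by move=> B; rewrite inE => /eqP ->; apply/subsetP => w; rewrite !inE.
    + by move=> w; rewrite inUt inE => /eqP ->; exists 0; rewrite ?inE.
    + by [].
    + move=> w i j k ij jk kl; have -> : j = k by lia.
      by move=> _ ->.
    + move=> i; rewrite ltnS leqn0 => /eqP ->; exists v; by rewrite ?inE.
  - by move=> B; rewrite inE => /eqP ->; rewrite cards1.
move=> u; have [ul ur dis] := uniq_node (o:=o) u.
have [P1 s1 b1] := IHl ul; have [P2 s2 b2] := IHr ur.
have hl := @tarc_in _ l; have hr := @tarc_in _ r.
case: o u => u.
- split; rewrite [pd _]/= ?size_cat ?addn_gt0 ?s1 //.
    rewrite Ut_node; apply: pdec_cat P1 P2 dis _.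
    by move=> x y /= /or3P [h|h|//]; [constructor 1|constructor 2].
  move=> B; rewrite mem_cat => /orP [/b1|/b2] h; apply: (leq_trans h).
    by rewrite ltnS; apply: leq_maxl.
  by rewrite ltnS; apply: leq_maxr.
- have -> : cw (DNode DSeries l r) = minn (cw l + size (leaves r)) (cw r + size (leaves l)) by [].
  rewrite [pd _]/=.
  case: ifP => h; split; rewrite ?size_map //.
  + rewrite Ut_node; apply: pdec_map P1 dis s1 _.
    move=> x y /= /or4P [h1|/hr /andP [xr yr]|/andP [xl yr]|/andP [xr yl]]; [by left| | |]; right;
      by rewrite !inE ?xr ?yr ?xl ?yl ?orbT.
  + move=> B /mapP [B0 hB0 ->]; apply: (leq_trans (card_setU_le _ _)).
    have -> : minn (cw l + size (leaves r)) (cw r + size (leaves l)) = cw l + size (leaves r).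
      by apply/minn_idPl.
    by rewrite card_Ut // -addSn leq_add2r b1.
  + rewrite Ut_node setUC.
    have dis' : [disjoint Ut r & Ut l] by rewrite disjoint_sym.
    apply: pdec_map P2 dis' s2 _.
    move=> x y /= /or4P [/hl /andP [xl yl]|h1|/andP [xl yr]|/andP [xr yl]]; [ |by left| |]; right;
      by rewrite !inE ?xr ?yr ?xl ?yl ?orbT.
  + move=> B /mapP [B0 hB0 ->]; apply: (leq_trans (card_setU_le _ _)).
    have -> : minn (cw l + size (leaves r)) (cw r + size (leaves l)) = cw r + size (leaves l).
      by apply/minn_idPr; apply: ltnW; rewrite ltnNge h.
    by rewrite card_Ut // -addSn leq_add2r b2.
- split; rewrite [pd _]/= ?size_cat ?addn_gt0 ?s1 //.
    rewrite Ut_node; apply: pdec_cat P1 P2 dis _.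
    move=> x y /= /or3P [h|h|h]; [constructor 1|constructor 2|constructor 3]; by rewrite // !inE.
  move=> B; rewrite mem_cat => /orP [/b1|/b2] h; apply: (leq_trans h).
    by rewrite ltnS; apply: leq_maxl.
  by rewrite ltnS; apply: leq_maxr.
Qed.

Lemma ord_conn_le n (i j : 'I_n) : connect (fun a b : 'I_n => val b == (val a).+1) i j -> i <= j.
Proof.
move=> /connectP [p pp ->]; elim: p i pp => [|c p IH] i //= /andP [/eqP e pp].
by apply: leq_trans (IH _ pp); rewrite e.
Qed.

Lemma ord_le_conn n (i j : 'I_n) : i <= j -> connect (fun a b : 'I_n => val b == (val a).+1) i j.
Proof.
move=> ij; have [d e] : exists d, val j = i + d by exists (j - i); rewrite subnKC.
elim: d j ij e => [|d IH] j ij e.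
  by have -> : j = i by apply: val_inj; rewrite /= e addn0.
have jn : j.-1 < n by apply: leq_ltn_trans (leq_pred _) (ltn_ord j).
apply: (connect_trans (IH (Ordinal jn) _ _)); rewrite /= ?e ?addnS //=.
  exact: leq_addr.
by apply: connect1; rewrite /= e addnS.
Qed.

Lemma dtw_upper (V : finType) (E : rel V) X :
  pdec E setT X -> 0 < size X ->
  exists (VT : finType) (ET : rel VT) Xe W,
    is_dtree_decomp E ET Xe W /\ \max_r #|bagT ET Xe W r| <= \max_(B <- X) #|B|.
Proof.
move=> [sb cv ar cs nw] s0.
set n := size X.
pose ET := fun a b : 'I_n => val b == (val a).+1.
pose first (v : V) := find (fun B : {set V} => v \in B) X.
have first_lt : forall v, first v < n.
  move=> v; rewrite /first -has_find; have [i iX vi] := cv v (in_setT v).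
  by apply/hasP; exists (nth set0 X i) => //; apply: mem_nth.
have in_first : forall v, v \in nth set0 X (first v).
  move=> v; have := first_lt v; rewrite /first -has_find => h.
  exact: (nth_find set0 h).
have first_le : forall v j, v \in nth set0 X j -> first v <= j.
  move=> v j vj; rewrite leqNgt; apply/negP => h.
  by have := before_find set0 h; rewrite /= vj.
pose W (i : 'I_n) := [set v | first v == i].
pose Xe (a b : 'I_n) := nth set0 X a :&: nth set0 X b.
have memS : forall (b : 'I_n) v, (v \in \bigcup_(r | connect ET b r) W r) = (b <= first v).
  move=> b v; apply/bigcupP/idP.
    by move=> [r /ord_conn_le br]; rewrite inE => /eqP ->.
  move=> h; exists (Ordinal (first_lt v)); last by rewrite inE.
  exact: ord_le_conn.
exists 'I_n, ET, Xe, W; split.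
  split.
  - exists (Ordinal s0); split.
    + by move=> a; rewrite /ET.
    + move=> b bn.
      have b0 : 0 < b by rewrite lt0n; apply: contra bn => /eqP h; apply/eqP/val_inj.
      have bm : b.-1 < n by apply: leq_ltn_trans (leq_pred _) (ltn_ord b).
      exists (Ordinal bm); split; first by rewrite /ET /= prednK.
      by move=> a' /eqP e; apply: val_inj; rewrite /= e.
    + by move=> b; apply: ord_le_conn.
  - move=> r; have [v vr hv] := nw r (ltn_ord r).
    apply/set0Pn; exists v; rewrite inE eqn_leq first_le //=.
    rewrite leqNgt; apply/negP => h; move: (hv _ h); by rewrite in_first.
  - move=> r r' rr; rewrite -setI_eq0; apply/eqP/setP => v; rewrite !inE.
    apply/negP => /andP [/eqP e1 /eqP e2]; move/negP: rr; apply; apply/eqP; apply: val_inj => /=.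
    by rewrite -e1 -e2.
  - by move=> v; exists (Ordinal (first_lt v)); rewrite inE.
  - move=> a b /eqP Eab x p pp az xS lS.
    apply/negPn/negP => nall.
    have nall' : ~~ all (fun w => w \in \bigcup_(r | connect ET b r) W r) p.
      by move: nall; rewrite /= xS.
    have [u [w [up wp Euw uS wS]]] := crossing pp xS nall'.
    have wZ : w \notin Xe a b.
      by move: az => /= /andP [_ /allP]; apply.
    move/negP: wZ; apply.
    have uS' : u \in \bigcup_(r | connect ET b r) W r := uS.
    have wS' : w \notin \bigcup_(r | connect ET b r) W r := wS.
    rewrite memS in uS'; rewrite memS -ltnNge in wS'.
    have [i [j [ij jX ui wj]]] := ar u w Euw.
    have fi := first_le _ _ ui.
    clear uS wS; rename uS' into uS; rename wS' into wS.
    have fw : first w <= a by rewrite -ltnS -Eab.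
    have Eab' : (b : nat) = (a : nat).+1 := Eab.
    rewrite !inE.
    rewrite (cs w (first w) a j fw _ jX (in_first w) wj); last by lia.
    by rewrite (cs w (first w) b j _ _ jX (in_first w) wj) //; lia.
apply/bigmax_leqP => r _.
apply: leq_trans (@leq_bigmax_seq _ X xpredT (fun B : {set V} => #|B|) _ (mem_nth set0 (ltn_ord r)) isT).
apply: subset_leq_card; apply/subsetP => v; rewrite inE => /orP [|/bigcupP [a _ /bigcupP [c /andP [Eac /orP [/eqP ar' | /eqP cr]]]]].
- by rewrite inE => /eqP <-.
- by rewrite ar' inE => /andP [].
- by rewrite cr inE => /andP [].
Qed.

Lemma pred_le a m : a.+1 <= m -> a <= m.-1.
Proof. by case: m. Qed.

Theorem theorem5p4 :
  exists (leaf0 : seq nat) (step : dcop -> seq aexp) (ipw itw : nat),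
    forall (V : finType) (E : rel V) (t : dctree V),
      is_binary_dicotree E t ->
      dpw_is E (nth 0 (run_alg leaf0 step t) ipw) /\
      dtw_is E (nth 0 (run_alg leaf0 step t) itw).
Proof.
exists leaf0, step, 0, 0 => V E t [u al eE].
rewrite run_algE /=.
have eE' : E = tarc t.
  by apply: functional_extensionality => x; apply: functional_extensionality => y; apply: eE.
subst E.
have UT : Ut t = setT by apply/setP => x; rewrite !inE al.
have [b Hb] := haven_tree u; rewrite UT in Hb.
have [P s0 bd] := pd_spec u; rewrite UT in P.
have lowp : forall X, is_dpath_decomp (tarc t) X -> cw t <= dpd_width X.
  by move=> X hX; apply: pred_le; apply: dpw_lower Hb hX.
have lowt : forall (VT : finType) (ET : rel VT) X W,
    is_dtree_decomp (tarc t) ET X W -> cw t <= dtd_width ET X W.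
  by move=> VT ET X W hX; apply: pred_le; apply: (dtw_lower Hb hX).
have maxb : \max_(B <- pd t) #|B| <= (cw t).+1.
  by apply/bigmax_leqP_seq => B hB _; apply: bd.
have [sb cv ar cs nw] := P.
have dp : is_dpath_decomp (tarc t) (pd t).
  split => //; by move=> v; apply: cv; rewrite inE.
split; split => //.
- exists (pd t) => //; apply/eqP; rewrite eqn_leq lowp // andbT.
  rewrite /dpd_width; move: maxb; case: (\max_(B <- pd t) #|B|) => //.
- have [VT [ET [Xe [W [hd hw]]]]] := dtw_upper P s0.
  exists VT, ET, Xe, W; split => //; apply/eqP; rewrite eqn_leq lowt // andbT.
  have := leq_trans hw maxb; rewrite /dtd_width -/(bagT ET Xe W).
  by case: (\max_r #|bagT ET Xe W r|).
Qed.
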